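(* Let $U:\mathbb{R}_1\to\mathbb{R}_1$ be as defined in the context, let $a\in\mathbb{N}_1$ and $l\in\mathbb{N}_1$ with $U^l(a)=a$. Then for every $x\in\mathbb{R}_1$ the following are equivalent: (i) the parity sequence $\mathcal{P}_U(x)=(\lfloor U^i(x)\rfloor \bmod 2)_{i\ge 0}$ is eventually periodic with period $s=(a\bmod 2,\,U(a)\bmod 2,\dots,U^{l-1}(a)\bmod 2)$, i.e. there is $j\in\mathbb{N}_0$ such that $(\lfloor U^{i}(x)\rfloor\bmod 2,\dots,\lfloor U^{i+l-1}(x)\rfloor\bmod 2)=s$ for all $i=j+ml$, $m\in\mathbb{N}_0$; (ii) $\mathcal{T}_U(x)$ tends to $\{U^t(a)\}$ from above, i.e. there is $j_0\in\mathbb{N}_0$ such that for every $j\in\{0,1,\dots,l-1\}$ the sequence $\big(U^{kl}(U^{j+j_0}(x))\big)_{k\ge 0}$ converges to $U^j(a)$ as $k\to\infty$ and all of its terms are $\ge U^j(a)$.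
   Context: $\mathbb{R}_1=\{x\in\mathbb{R}:x\ge1\}$, $\mathbb{N}_1=\{1,2,\dots\}$, $\mathbb{N}_0=\{0,1,2,\dots\}$, $\lfloor x\rfloor$ is the floor of $x$. $U:\mathbb{R}_1\to\mathbb{R}_1$ is given by $U(x)=x/2$ if $\lfloor x\rfloor$ is even and $U(x)=(3x+1)/2$ if $\lfloor x\rfloor$ is odd; $U^i$ denotes the $i$-th iterate ($U^0=\mathrm{id}$), and $\mathcal{T}_U(x)=(U^i(x))_{i\ge0}$ is the trajectory of $x$. *)

(* Defs.v *)
From Stdlib Require Import Reals ZArith Arith.
Open Scope R_scope.

(* floor of x: Stdlib's Int_part x = up x - 1 is the floor. *)
Definition floor (x : R) : Z := Int_part x.

(* U(x) = x/2 if floor x is even, (3x+1)/2 if floor x is odd.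
   Defined on all of R; only used on R_1 = [1, +oo). *)
Definition U (x : R) : R :=
  if Z.even (floor x) then x / 2 else (3 * x + 1) / 2.

Fixpoint Uiter (i : nat) (x : R) : R :=
  match i with
  | O => x
  | S i' => U (Uiter i' x)
  end.

Definition parity (y : R) : Z := Z.modulo (floor y) 2.

(* Main.v *)
Require Import Defs.
From Stdlib Require Import Reals ZArith Arith Lia Lra.
Open Scope R_scope.

Lemma Uiter_add n p x : Uiter (n + p) x = Uiter n (Uiter p x).
Proof. induction n; simpl; [reflexivity| now rewrite IHn]. Qed.

Lemma floor_unique (n : Z) (r : R) : IZR n <= r -> r < IZR n + 1 -> Defs.floor r = n.
Proof.
  intros H1 H2. unfold Defs.floor. destruct (base_Int_part r) as [B1 B2].
  assert (Int_part r < n + 1)%Z by (apply lt_IZR; rewrite plus_IZR; lra).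
  assert (n < Int_part r + 1)%Z by (apply lt_IZR; rewrite plus_IZR; lra).
  lia.
Qed.

Lemma U_int n : exists m, U (IZR n) = IZR m.
Proof.
  unfold U. rewrite (floor_unique n (IZR n)) by lra.
  destruct (Z.even n) eqn:E.
  - apply Z.even_spec in E. destruct E as [m ->]. exists m. rewrite mult_IZR. lra.
  - assert (Z.odd n = true) by (rewrite <- Z.negb_even, E; reflexivity).
    apply Z.odd_spec in H. destruct H as [m ->]. exists (3*m+2)%Z.
    rewrite !plus_IZR, !mult_IZR. lra.
Qed.

Lemma Uiter_int t n : exists m, Uiter t (IZR n) = IZR m.
Proof.
  induction t; simpl. exists n; reflexivity.
  destruct IHt as [m ->]. apply U_int.
Qed.

Definition kap (c : R) : R := if Z.even (Defs.floor c) then / 2 else 3 / 2.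

Fixpoint Pi (c : R) (t : nat) : R :=
  match t with O => 1 | S t' => kap (Uiter t' c) * Pi c t' end.

Lemma kap_pos c : 0 < kap c.
Proof. unfold kap; destruct (Z.even _); lra. Qed.

Lemma Pi_pos c t : 0 < Pi c t.
Proof. induction t; simpl. lra. pose proof (kap_pos (Uiter t c)). nra. Qed.

Lemma step y c : parity y = parity c -> U y - U c = kap c * (y - c).
Proof.
  unfold parity, U, kap. intro H.
  assert (E : Z.even (Defs.floor y) = Z.even (Defs.floor c)).
  { rewrite !Zeven_mod, H. reflexivity. }
  rewrite E. destruct (Z.even (Defs.floor c)); field.
Qed.

Lemma track t z c : (forall r, (r < t)%nat -> parity (Uiter r z) = parity (Uiter r c)) ->
  Uiter t z - Uiter t c = Pi c t * (z - c).
Proof.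
  induction t; intro H; simpl. lra.
  rewrite step by (apply H; lia).
  rewrite IHt by (intros; apply H; lia). ring.
Qed.

Lemma Pi_lower c t : Uiter t c >= Pi c t * c.
Proof.
  induction t; simpl. lra.
  pose proof (kap_pos (Uiter t c)).
  assert (U (Uiter t c) >= kap (Uiter t c) * Uiter t c).
  { unfold U, kap. destruct (Z.even _); lra. }
  nra.
Qed.

Lemma Pi_odd c t : exists k, Pi c t * 2 ^ t = IZR k /\ Z.odd k = true.
Proof.
  induction t; simpl. exists 1%Z. split; [lra|reflexivity].
  destruct IHt as [k [H1 H2]]. unfold kap. destruct (Z.even _).
  - exists k. split; [|exact H2]. rewrite <- H1. field.
  - exists (3 * k)%Z. rewrite Z.odd_mul, H2. split; [|reflexivity].
    rewrite mult_IZR, <- H1. field.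
Qed.

Lemma Pi_ne1 c t : (1 <= t)%nat -> Pi c t <> 1.
Proof.
  intros Ht E. destruct (Pi_odd c t) as [k [H1 H2]].
  rewrite E, Rmult_1_l in H1.
  replace 2 with (IZR 2) in H1 by reflexivity.
  rewrite pow_IZR in H1. apply eq_IZR in H1. subst k.
  rewrite Z.odd_pow in H2 by lia. discriminate.
Qed.

Lemma uniform (P : nat -> nat -> Prop) n :
  (forall j, (j < n)%nat -> exists K, forall k, (K <= k)%nat -> P j k) ->
  exists K, forall j, (j < n)%nat -> forall k, (K <= k)%nat -> P j k.
Proof.
  induction n; intro H. exists O; intros; lia.
  destruct IHn as [K1 HK1]. intros; apply H; lia.
  destruct (H n) as [K2 HK2]. lia.
  exists (Nat.max K1 K2). intros j Hj k Hk.
  destruct (Nat.eq_dec j n). subst; apply HK2; lia. apply HK1; lia.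
Qed.
Lemma Uiter_per (c : R) l : Uiter l c = c -> forall m, Uiter (m * l) c = c.
Proof.
  intros H m. induction m; simpl. reflexivity.
  rewrite Uiter_add, IHm. exact H.
Qed.

Theorem proposition1 (a l : nat) (ha : (1 <= a)%nat) (hl : (1 <= l)%nat)
  (hper : Uiter l (INR a) = INR a) (x : R) (hx : 1 <= x) :
  (exists j : nat, forall m r : nat, (r < l)%nat ->
      parity (Uiter (j + m * l + r) x) = parity (Uiter r (INR a)))
  <->
  (exists j0 : nat, forall j : nat, (j < l)%nat ->
      Un_cv (fun k : nat => Uiter (k * l) (Uiter (j + j0) x)) (Uiter j (INR a))
      /\ (forall k : nat, Uiter j (INR a) <= Uiter (k * l) (Uiter (j + j0) x))).
Proof.
  set (a' := INR a).
  assert (Ha' : a' = IZR (Z.of_nat a)) by apply INR_IZR_INZ.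
  assert (apos : 1 <= a') by (unfold a'; apply (le_INR 1); exact ha).
  split.
  - intros [j H]. set (y := Uiter j x).
    assert (HP : forall k r, (r < l)%nat ->
        parity (Uiter r (Uiter (k * l) y)) = parity (Uiter r a')).
    { intros k r Hr. unfold y.
      replace (Uiter r (Uiter (k * l) (Uiter j x))) with (Uiter (j + k * l + r) x).
      apply H; exact Hr.
      rewrite <- !Uiter_add. f_equal. lia. }
    set (lam := Pi a' l).
    assert (lam_pos : 0 < lam) by apply Pi_pos.
    assert (lam_lt : lam < 1).
    { pose proof (Pi_lower a' l). fold lam in H0. fold a' in hper. rewrite hper in H0.
      pose proof (Pi_ne1 a' l hl). fold lam in H1. nra. }
    assert (Hk : forall k, Uiter (k * l) y - a' = lam ^ k * (y - a')).
    { induction k. simpl. ring.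
      simpl (S k * l)%nat. rewrite Uiter_add.
      pose proof (track l (Uiter (k * l) y) a' (HP k)).
      fold a' in hper. rewrite hper in H0. fold lam in H0. simpl. nra. }
    assert (yge : a' <= y).
    { destruct (Rle_or_lt a' y) as [h|h]. exact h. exfalso.
      destruct (pow_lt_1_zero lam ltac:(rewrite Rabs_right; lra) (/ (a' - y))
                  ltac:(apply Rinv_0_lt_compat; lra)) as [N HN].
      specialize (HN N (le_n N)). rewrite Rabs_right in HN by (left; apply pow_lt; lra).
      assert (lam ^ N * (a' - y) < 1).
      { apply Rmult_lt_reg_r with (/ (a' - y)). apply Rinv_0_lt_compat; lra.
        rewrite Rmult_assoc, Rinv_r by lra. lra. }
      assert (0 < lam ^ N * (a' - y)) by (apply Rmult_lt_0_compat; [apply pow_lt|]; lra).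
      specialize (Hk N).
      assert (F : Defs.floor (Uiter (N * l) y) = (Z.of_nat a - 1)%Z).
      { apply floor_unique; rewrite minus_IZR, <- Ha'; simpl; lra. }
      assert (Fa : Defs.floor a' = Z.of_nat a).
      { apply floor_unique; lra. }
      pose proof (HP N 0%nat ltac:(lia)). simpl in H2. unfold parity in H2.
      rewrite F, Fa in H2. Z.div_mod_to_equations. lia. }
    exists j. intros j' Hj'.
    assert (E : forall k, Uiter (k * l) (Uiter (j' + j) x) - Uiter j' a'
                 = Pi a' j' * lam ^ k * (y - a')).
    { intro k. replace (Uiter (k * l) (Uiter (j' + j) x)) with (Uiter j' (Uiter (k * l) y)).
      rewrite track. rewrite Hk. ring.
      intros r Hr. apply HP. lia.
      unfold y. rewrite <- !Uiter_add. f_equal. lia. }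
    pose proof (Pi_pos a' j') as Pp.
    split.
    + intros eps Heps.
      set (C := Pi a' j' * (y - a')).
      assert (C0 : 0 <= C) by (unfold C; nra).
      destruct (pow_lt_1_zero lam ltac:(rewrite Rabs_right; lra) (eps / (C + 1))
                  ltac:(apply Rdiv_lt_0_compat; lra)) as [N HN].
      exists N. intros n Hn. specialize (HN n Hn). unfold R_dist. rewrite E.
      assert (0 < lam ^ n) by (apply pow_lt; lra).
      rewrite Rabs_right in HN by lra.
      replace (Pi a' j' * lam ^ n * (y - a')) with (C * lam ^ n) by (unfold C; ring).
      rewrite Rabs_right by nra.
      assert (lam ^ n * (C + 1) < eps).
      { apply Rmult_lt_reg_r with (/ (C + 1)). apply Rinv_0_lt_compat; lra.
        rewrite Rmult_assoc, Rinv_r by lra. unfold Rdiv in HN. lra. }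
      nra.
    + intro k. specialize (E k). assert (0 < lam ^ k) by (apply pow_lt; lra).
      assert (0 <= Pi a' j' * lam ^ k * (y - a')) by
        (apply Rmult_le_pos; [apply Rmult_le_pos|]; lra). lra.
  - intros [j0 H].
    destruct (uniform (fun j k => parity (Uiter (k * l) (Uiter (j + j0) x))
                                  = parity (Uiter j a')) l) as [K HK].
    { intros j Hj. destruct (H j Hj) as [Hc Hlow].
      destruct (Hc 1 ltac:(lra)) as [N HN]. exists N. intros k Hk.
      specialize (HN k ltac:(lia)). specialize (Hlow k). unfold R_dist in HN.
      rewrite Rabs_right in HN by lra.
      destruct (Uiter_int j (Z.of_nat a)) as [z Hz]. rewrite <- Ha' in Hz. fold a' in Hz.
      unfold parity. rewrite Hz in *.
      rewrite (floor_unique z (IZR z)) by lra.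
      rewrite (floor_unique z) by lra. reflexivity. }
    exists (j0 + K * l)%nat. intros m r Hr.
    replace (j0 + K * l + m * l + r)%nat with ((K + m) * l + (r + j0))%nat by nia.
    rewrite Uiter_add. apply HK. exact Hr. lia.
Qed.
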